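(* Let $N\ge1$ and $L=\sum_{i=0}^N a_i(x)\partial_x^i$ with $a_i(x)=\sum_{j=0}^i a_{i,j}x^j$ complex polynomials, $a_0\equiv0$, $a_i\equiv0$ for $i>N$. Suppose there are $\lambda_n\in\mathbb{C}$ ($n\ge0$, $\lambda_0=0$, and $\lambda_n\notin\{0,\lambda_1,\ldots,\lambda_{n-1}\}$ for $n\ge1$) and monic polynomials $P_n(x)=\sum_{i=0}^n b_{n,i}x^i$ of degree $n$ with $\sum_{i=1}^Na_i\partial_x^iP_n=\lambda_nP_n$ for all $n\ge0$ (convention: $b_{m,m}=1$, $b_{m,l}=0$ for $l>m$). Let $(\gamma_n)_{n\ge1}$ be nonzero complex numbers and define $P_0^{(1)}=P_0$ and $P_n^{(1)}=P_n+\gamma_nP_{n-1}$ for $n\ge1$. Assume there is a differential operator $L^{(1)}=\sum_{i=0}^{\widetilde N}a^{(1)}_i(x)\partial_x^i$ with complex polynomial coefficients, $\deg a_i^{(1)}\le i$, of order $\widetilde N\ge N$, such that $L^{(1)}P_n^{(1)}=\lambda_nP_n^{(1)}$ for all $n\ge0$. Then for all integers $n,k$ with $n\ge k>\widetilde N$, $$\sum_{j=0}^{k-1}(-1)^j\left[\sum_{s=1}^N\binom{n-k+j}{s-1}s!\,a_{s,s}\right]b_{n-k+j,n-k}\sum_{r=1}^{k-j}\gamma_{n-k+j+1}\cdots\gamma_{n-k+j+r}\,E_{k,n,j+r-1}=0,$$ where, for $0\le t\le k-1$, $E_{k,n,t}$ is the determinant of the $(k-t-1)\times(k-t-1)$ matrix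 whose $(\rho,c)$ entry ($1\le\rho,c\le k-t-1$) is $b_{n-k+t+1+c,\;n-k+t+\rho}$, and $E_{k,n,k-1}=1$.
   Context: $\partial_x^i$ denotes the $i$-th derivative in $x$. With the convention $b_{m,m}=1$, $b_{m,l}=0$ for $l>m$, the matrix defining $E_{k,n,t}$ is upper Hessenberg with first row $b_{n-k+t+2,n-k+t+1},\ldots,b_{n,n-k+t+1}$, ones on the subdiagonal and zeros below it. *)

(* Defs.v *)
From HB Require Import structures.
From mathcomp Require Import all_boot all_order all_algebra.
From mathcomp Require Import reals.
From mathcomp.real_closed Require Import complex.
Set Implicit Arguments. Unset Strict Implicit. Unset Printing Implicit Defensive.
Import Order.TTheory GRing.Theory Num.Theory.
Local Open Scope ring_scope.

Definition diffop (F : nzRingType) (M : nat) (c : nat -> {poly F}) (p : {poly F})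
  : {poly F} := \sum_(0 <= i < M.+1) c i * p^`(i).

(* E_{k,n,t}(b) : determinant of the (k-t-1)x(k-t-1) matrix with (rho,c) entry
   (1-based) b_{n-k+t+1+c, n-k+t+rho}; 0-based i = rho-1, j = c-1.
   For t = k-1 the matrix is empty and the determinant is 1. *)
Definition Edet (F : comNzRingType) (b : nat -> nat -> F) (k n t : nat) : F :=
  \det (\matrix_(i < k - t - 1, j < k - t - 1)
          b (n - k + t + 2 + j)%N (n - k + t + 1 + i)%N).

(* Main.v *)
Require Import Defs.
From HB Require Import structures.
From mathcomp Require Import all_boot all_order all_algebra zify ring.
From mathcomp Require Import reals.
From mathcomp.real_closed Require Import complex.
Import Order.TTheory GRing.Theory Num.Theory.
Local Open Scope ring_scope.


Definition Dm {F : comNzRingType} (b : nat -> nat -> F) (p d : nat) : F :=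
  \det (\matrix_(i < d, j < d) b (p.+1 + j)%N (p + i)%N).
Definition Fm {F : comNzRingType} (b : nat -> nat -> F) (r p d : nat) : F :=
  \det (\matrix_(i < d, j < d) if (i : nat) == 0%N then b (p.+1 + j)%N r else b (p.+1 + j)%N (p + i)%N).

Section Det.
Variable F : comNzRingType.
Variable b : nat -> nat -> F.
Hypothesis b1 : forall m, b m m = 1.
Hypothesis b0 : forall m l, (m < l)%N -> b m l = 0.

Lemma DmF p d : Dm b p d = Fm b p p d.
Proof.
rewrite /Dm /Fm; congr (\det _); apply/matrixP => i j; rewrite !mxE.
by case: eqP => // ->; rewrite addn0.
Qed.

Lemma Fm1 r p : Fm b r p 1 = b p.+1 r.
Proof. by rewrite /Fm det_mx11 mxE /= addn0. Qed.

Lemma Fm_rec r p d : Fm b r p d.+2 = b p.+1 r * Dm b p.+1 d.+1 - Fm b r p.+1 d.+1.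
Proof.
rewrite /Fm (expand_det_col _ ord0) big_ord_recl big_ord_recl big1; last first.
  move=> i _; rewrite !mxE /= b0 ?mul0r //; rewrite /bump /=; lia.
rewrite addr0 !mxE /= addn0 /cofactor /= expr0 mul1r.
have -> : (p + bump 0 0 = p.+1)%N by rewrite /bump /=; lia.
rewrite b1 mul1r /bump /= expr1 mulN1r.
congr (_ * _ - _).
  rewrite /Dm; congr (\det _); apply/matrixP => i j; rewrite !mxE /=.
  rewrite /bump /=; congr b; lia.
congr (\det _); apply/matrixP => i j; rewrite !mxE /=.
rewrite /bump /=; case: (nat_of_ord i) => [|i'] /=.
  by congr b; lia.
by congr b; lia.
Qed.

Lemma Fm_sum d : forall r p, Fm b r p d.+1 =
  \sum_(0 <= l < d.+1) (-1) ^+ l * b (p.+1 + l)%N r * Dm b (p.+1 + l)%N (d - l)%N.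
Proof.
elim: d => [|d IH] r p.
  by rewrite Fm1 big_nat1 /Dm det_mx00 expr0 mul1r mulr1 addn0.
rewrite Fm_rec IH [in RHS]big_nat_recl // expr0 mul1r addn0 subn0 -sumrN; congr (_ + _).
apply: eq_bigr => l _.
by rewrite exprS subSS !mulN1r -addSnnS mulNr; ring.
Qed.

Lemma Dm_rec p d : Dm b p d.+1 =
  \sum_(0 <= l < d.+1) (-1) ^+ l * b (p.+1 + l)%N p * Dm b (p.+1 + l)%N (d - l)%N.
Proof. by rewrite DmF Fm_sum. Qed.

Lemma sgnE' (e j : nat) : (-1)^+(e + j.*2) = (-1)^+e :> F.
Proof. by rewrite exprD -mul2n exprM sqrrN expr1n expr1n mulr1. Qed.

Lemma ident n q : (q <= n)%N ->
  \sum_(0 <= l < n.+1) (-1)^+(n - l) * Dm b l (n - l) * b l q = (q == n)%:R.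
Proof.
move=> hqn; rewrite -(subnK hqn); move: (n - q)%N => d {hqn n}.
rewrite (big_cat_nat (leq0n q)) /=; last by lia.
rewrite big_nat big1 ?add0r; last by move=> l /andP[_ hl]; rewrite b0 ?mulr0.
case: d => [|d].
  by rewrite add0n big_nat1 subnn eqxx b1 /Dm det_mx00; rewrite expr0 !mulr1.
rewrite (big_ltn (_ : (q < (d.+1 + q).+1)%N)); last by lia.
rewrite (_ : (q == d.+1 + q) = false); last by apply/negbTE; lia.
rewrite (_ : (d.+1 + q - q = d.+1)%N); last by lia.
rewrite b1 mulr1 Dm_rec mulr_sumr.
rewrite (big_addn 0 _ q.+1) (_ : ((d.+1 + q).+1 - q.+1 = d.+1)%N); last by lia.
rewrite -big_split /= big_nat big1 // => i /andP[_ hi].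
rewrite (_ : (d.+1 + q - (i + q.+1) = d - i)%N); last by lia.
rewrite (_ : (i + q.+1 = q.+1 + i)%N); last by lia.
have hs : (-1)^+(d.+1) * (-1)^+i = - (-1)^+(d - i) :> F.
  rewrite -exprD (_ : (d.+1 + i = (d - i).+1 + i.*2)%N); last by lia.
  by rewrite sgnE' exprS mulN1r.
transitivity (((-1)^+(d.+1) * (-1)^+i) * b (q.+1 + i)%N q * Dm b (q.+1 + i)%N (d - i) +
  (-1) ^+ (d - i) * Dm b (q.+1 + i) (d - i) * b (q.+1 + i)%N q); first by ring.
rewrite hs; ring.
Qed.

Lemma EdetE k n t : Edet b k n t = Dm b (n - k + t + 1) (k - t - 1).
Proof.
rewrite /Edet /Dm; congr (\det _); apply/matrixP => i j; rewrite !mxE.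
congr b; lia.
Qed.

End Det.


Definition Op {F : comNzRingType} (s e : nat) (c : nat -> {poly F}) (p : {poly F}) : {poly F} :=
  \sum_(s <= i < e) c i * p^`(i).

Section Pol.
Variable F : comNzRingType.
Implicit Types (c : nat -> {poly F}) (p : {poly F}).

Lemma sgnE (e j : nat) : (-1)^+(e + j.*2) = (-1)^+e :> F.
Proof. by rewrite exprD -mul2n exprM sqrrN expr1n expr1n mulr1. Qed.

Lemma OpD s e c p1 p2 : Op s e c (p1 + p2) = Op s e c p1 + Op s e c p2.
Proof. by rewrite /Op -big_split; apply: eq_bigr => i _; rewrite derivnD mulrDr. Qed.

Lemma OpZ s e c k p : Op s e c (k *: p) = k *: Op s e c p.
Proof. by rewrite /Op scaler_sumr; apply: eq_bigr => i _; rewrite derivnZ scalerAr. Qed.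

Lemma OpN s e c p : Op s e c (- p) = - Op s e c p.
Proof. by rewrite -scaleN1r OpZ scaleN1r. Qed.

Lemma Op_sum s e c (k : nat -> F) (Q : nat -> {poly F}) m :
  Op s e c (\sum_(0 <= l < m) k l *: Q l) = \sum_(0 <= l < m) k l *: Op s e c (Q l).
Proof.
elim: m => [|m IH]; first by rewrite !big_geq //; have := OpZ s e c 0 0; rewrite !scale0r.
by rewrite !big_nat_recr //= OpD IH OpZ.
Qed.

Lemma Op_Xn s e c n q : (forall i, (size (c i) <= i.+1)%N) -> (q + e <= n)%N ->
  (Op s e c 'X^n)`_q = 0.
Proof.
move=> hc hqe; rewrite /Op coef_sum big_nat big1 // => i /andP[_ hi].
rewrite derivnXn mulrnAr coefMn coefMXn.
have -> : (q < n - i)%N by lia.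
by rewrite mul0rn.
Qed.

Lemma coef_term (c0 : {poly F}) p s m : (size c0 <= s.+1)%N -> (size p <= m.+1)%N ->
  (c0 * p^`(s))`_m = c0`_s * p`_m * (m ^_ s)%:R.
Proof.
move=> hc hp; rewrite coefM.
have hz : forall j : 'I_m.+1, (j : nat) != s -> c0`_j * (p^`(s))`_(m - j) = 0.
  move=> j hj; case: (ltnP s j) => hsj.
    by rewrite (nth_default _ (leq_trans hc hsj)) mul0r.
  rewrite coef_derivn (nth_default _ (_ : (size p <= s + (m - j))%N)) ?mul0rn ?mulr0 //.
  apply: leq_trans hp _; have := ltn_ord j; lia.
case: (leqP s m) => hsm.
  rewrite (bigD1 (Ordinal (hsm : (s < m.+1)%N))) //= big1 ?addr0; last first.
    by move=> j hj; apply: hz; apply: contraNneq hj => h; apply/eqP/val_inj.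
  rewrite coef_derivn (_ : (s + (m - s) = m)%N); last by lia.
  by rewrite [RHS]mulr_natr mulrnAr.
rewrite big1 ?ffact_small ?mulr0 // => j _; apply: hz.
have := ltn_ord j; lia.
Qed.

End Pol.

Lemma tri_exch (V : zmodType) (f : nat -> nat -> V) n :
  \sum_(0 <= l < n.+1) \sum_(0 <= m < l) f l m =
  \sum_(0 <= m < n.+1) \sum_(1 <= r < (n - m).+1) f (m + r)%N m.
Proof.
elim: n => [|n IH].
  by rewrite !big_nat1 !big_geq.
rewrite big_nat_recr //= IH [RHS]big_nat_recr //= subnn [X in _ = _ + X]big_geq // addr0.
rewrite -big_split /=; apply: eq_big_nat => m /andP[_ hm].
rewrite (_ : ((n.+1 - m).+1 = (n - m).+2)%N); last by lia.
rewrite [RHS]big_nat_recr /=; last by lia.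
by rewrite (_ : (m + (n - m).+1 = n.+1)%N) //; lia.
Qed.


Theorem theorem3 (R : realType) (N : nat) (a : nat -> {poly R[i]})
  (lam : nat -> R[i]) (P : nat -> {poly R[i]}) (gam : nat -> R[i])
  (Nt : nat) (a1 : nat -> {poly R[i]}) :
  (1 <= N)%N ->
  (forall i, (size (a i) <= i.+1)%N) ->
  a 0%N = 0 ->
  (forall i, (N < i)%N -> a i = 0) ->
  lam 0%N = 0 ->
  (forall n, (1 <= n)%N -> lam n != 0 /\ (forall m, (1 <= m < n)%N -> lam n != lam m)) ->
  (forall n, P n \is monic /\ size (P n) = n.+1) ->
  (forall n, \sum_(1 <= i < N.+1) a i * (P n)^`(i) = lam n *: P n) ->
  (forall n, (1 <= n)%N -> gam n != 0) ->
  (N <= Nt)%N ->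
  (forall i, (size (a1 i) <= i.+1)%N) ->
  (forall i, (Nt < i)%N -> a1 i = 0) ->
  a1 Nt != 0 ->
  (let P1 := fun n : nat => if n is m.+1 then P n + gam n *: P m else P 0%N in
   forall n, diffop Nt a1 (P1 n) = lam n *: P1 n) ->
  let b := fun m l : nat => (P m)`_l in
  forall n k : nat, (Nt < k)%N -> (k <= n)%N ->
    \sum_(0 <= j < k)
      (-1) ^+ j
      * (\sum_(1 <= s < N.+1) ('C(n - k + j, s.-1))%:R * (s`!)%:R * (a s)`_s)
      * b (n - k + j)%N (n - k)%N
      * \sum_(1 <= r < (k - j).+1)
          (\prod_(1 <= q < r.+1) gam (n - k + j + q)%N)
          * Edet b k n (j + r - 1)%N
    = 0.
Proof.
move=> hN hsa ha0 haN hl0 hlne hP hL hgam hNt hsa1 ha1N ha1Nt HL1 b n k hk hkn.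
have b1 : forall m, b m m = 1.
  move=> m; have [/monicP hm hs] := hP m.
  by rewrite /b -hm lead_coefE hs.
have b0 : forall m l, (m < l)%N -> b m l = 0.
  by move=> m l hml; rewrite /b nth_default // (proj2 (hP m)).
have hL' : forall m, Op 1 N.+1 a (P m) = lam m *: P m := hL.
have H0 : Op 0 Nt.+1 a1 (P 0%N) = lam 0%N *: P 0%N := HL1 0%N.
have HS : forall m, Op 0 Nt.+1 a1 (P m.+1 + gam m.+1 *: P m) =
    lam m.+1 *: (P m.+1 + gam m.+1 *: P m) := fun m => HL1 m.+1.
have hlam : forall m, lam m = \sum_(1 <= s < N.+1) (a s)`_s * (m ^_ s)%:R.
  move=> m; have := congr1 (fun p : {poly R[i]} => p`_m) (hL m).
  rewrite /= coefZ coef_sum -/(b m m) b1 mulr1 => <-.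
  apply: eq_bigr => s _; rewrite coef_term ?(proj2 (hP m)) //.
  by rewrite -/(b m m) b1 mulr1.
have hD : forall m, \sum_(1 <= s < N.+1) ('C(m, s.-1))%:R * (s`!)%:R * (a s)`_s
    = lam m.+1 - lam m.
  move=> m; rewrite !hlam -sumrB; apply: eq_big_nat => s /andP[hs _].
  case: s hs => [//|s] _ /=.
  have e : (m.+1 ^_ s.+1 = m ^_ s.+1 + 'C(m, s) * s.+1`!)%N.
    rewrite ffactSS ffactnSr factS mulnCA bin_ffact.
    case: (leqP s m) => hsm.
      rewrite [(s.+1 * _)%N]mulnC -mulnDr (_ : (m - s + s.+1 = m.+1)%N); last by lia.
      by rewrite mulnC.
    by rewrite ffact_small // !muln0 mul0n.
  rewrite e natrD natrM; ring.
pose g m r := \prod_(1 <= s < r.+1) gam (m + s)%N.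
pose c l m := (-1) ^+ (l - m).+1 * g m (l - m)%N * (lam m.+1 - lam m).
have hA : forall l, Op 0 Nt.+1 a1 (P l) = lam l *: P l + \sum_(0 <= m < l) c l m *: P m.
  elim=> [|l IH]; first by rewrite big_geq // addr0.
  have e : Op 0 Nt.+1 a1 (P l.+1) = lam l.+1 *: (P l.+1 + gam l.+1 *: P l)
     - gam l.+1 *: (lam l *: P l + \sum_(0 <= m < l) c l m *: P m).
    by rewrite -HS OpD OpZ IH addrK.
  rewrite e big_nat_recr //=.
  have ec : c l.+1 l = gam l.+1 * (lam l.+1 - lam l).
    by rewrite /c /g subSnn big_nat1 addn1 expr2 mulN1r opprK mul1r.
  have es : \sum_(0 <= m < l) c l.+1 m *: P m = - (gam l.+1 *: \sum_(0 <= m < l) c l m *: P m).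
    rewrite scaler_sumr -sumrN; apply: eq_big_nat => m /andP[_ hm].
    rewrite scalerA -scaleNr; congr (_ *: _).
    rewrite /c /g (_ : (l.+1 - m = (l - m).+1)%N); last by lia.
    rewrite [X in _ * X * _]big_nat_recr /=; last by lia.
    rewrite (_ : (m + (l - m).+1 = l.+1)%N); last by lia.
    rewrite exprS; ring.
  rewrite es ec !scalerDr !scalerA mulrBr scalerBl (mulrC (lam l.+1)).
  set A := lam l.+1 *: P l.+1; set B := (_ * lam l.+1) *: P l; set C := (_ * lam l) *: P l; set D := gam l.+1 *: _.
  ring.
pose be l := (-1) ^+ (n - l) * Dm b l (n - l).
have hX : 'X^n = \sum_(0 <= l < n.+1) be l *: P l.
  apply/polyP => i; rewrite coefXn coef_sum.
  under eq_bigr do rewrite coefZ.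
  case: (leqP i n) => hi.
    by rewrite -(@ident _ _ b1 b0 _ _ hi).
  rewrite (_ : (i == n) = false); last by apply/negbTE; lia.
  rewrite big_nat big1 // => l /andP[_ hl].
  by rewrite -/(b l i) b0 ?mulr0 //; lia.
have hO1 : (Op 0 Nt.+1 a1 'X^n)`_(n - k) = 0.
  by apply: Op_Xn => //; lia.
have hO2 : (Op 1 N.+1 a 'X^n)`_(n - k) = 0.
  by apply: Op_Xn => //; lia.
have e : Op 0 Nt.+1 a1 'X^n - Op 1 N.+1 a 'X^n =
    \sum_(0 <= l < n.+1) be l *: \sum_(0 <= m < l) c l m *: P m.
  rewrite hX !Op_sum -sumrB; apply: eq_bigr => l _.
  by rewrite hA hL' -scalerBr addrAC subrr add0r.
have hO : \sum_(0 <= l < n.+1) be l * \sum_(0 <= m < l) c l m * b m (n - k)%N = 0.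
  have := congr1 (fun p : {poly R[i]} => p`_(n - k)) e.
  rewrite /= coefB hO1 hO2 subrr coef_sum => H; rewrite [RHS]H.
  apply: eq_bigr => l _; rewrite coefZ coef_sum; congr (_ * _).
  by apply: eq_bigr => m _; rewrite coefZ.
have hO' : \sum_(0 <= m < n.+1) \sum_(1 <= r < (n - m).+1)
    be (m + r)%N * (c (m + r)%N m * b m (n - k)%N) = 0.
  rewrite -(tri_exch _ (fun l m => be l * (c l m * b m (n - k)%N))) -[RHS]hO.
  by apply: eq_bigr => l _; rewrite mulr_sumr.
rewrite (big_cat_nat (leq0n (n - k))) /= in hO'; last by lia.
rewrite [X in X + _]big_nat big1 ?add0r in hO'; last first.
  move=> m /andP[_ hm]; apply: big1 => r _; rewrite b0 ?mulr0 //.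
rewrite (big_addn 0 _ (n - k)) (_ : (n.+1 - (n - k) = k.+1)%N) in hO'; last by lia.
rewrite big_nat_recr /= in hO'; last by lia.
rewrite (_ : (n - (k + (n - k)) = 0)%N) in hO'; last by lia.
rewrite [X in _ + X]big_geq // addr0 in hO'.
have hT : forall x : R[i], (-1) ^+ k.+1 * x = 0 -> x = 0.
  move=> x hx; have h : (-1) ^+ (k.+1).*2 = 1 :> R[i] by rewrite -[X in _ ^+ X]add0n sgnE.
  by rewrite -[x]mul1r -h -addnn exprD -mulrA hx mulr0.
apply: hT; rewrite mulr_sumr -[RHS]hO'; apply: eq_big_nat => j /andP[_ hj].
rewrite hD (addnC j) (_ : (n - (n - k + j) = k - j)%N); last by lia.
rewrite !mulr_sumr; apply: eq_big_nat => r /andP[hr1 hr2].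
rewrite EdetE /be /c /g.
rewrite (_ : (n - k + (j + r - 1) + 1 = n - k + j + r)%N); last by lia.
rewrite (_ : (k - (j + r - 1) - 1 = n - (n - k + j + r))%N); last by lia.
rewrite (_ : (n - k + j + r - (n - k + j) = r)%N); last by lia.
have hs : (-1) ^+ k.+1 * (-1) ^+ j = (-1) ^+ (n - (n - k + j + r)) * (-1) ^+ r.+1 :> R[i].
  rewrite -!exprD (_ : (k.+1 + j = (n - (n - k + j + r)) + r.+1 + j.*2)%N) ?sgnE //; lia.
set D := Dm _ _ _; set Pr := \prod_(1 <= s < r.+1) _.
set L := lam _ - lam _; set B := b _ _.
transitivity (((-1) ^+ k.+1 * (-1) ^+ j) * L * B * Pr * D); first by ring.
rewrite hs; ring.
Qed.
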